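(* Let $(\mathbf{V}_\tau,\mathbf{A}_\tau)$ satisfy $\mathbf{1}_N^\top\mathbf{V}_\tau=\mathbf{1}_N^\top$, $\mathbf{1}_T^\top\mathbf{A}_\tau=\mathbf{1}_N^\top$, $\mathbf{V}_\tau\boldsymbol\mu=\boldsymbol\mu$, and let $\mathbf{V}_{\tau+1}=\mathbf{V}_\tau-\eta_V\mathbb{E}\hat\nabla_{\mathbf{V}}l-\eta_V\mathbf{h}_{\mathbf{V},\tau}$ and $\mathbf{A}_{\tau+1}=\mathbf{A}_\tau-\eta_A\mathbb{E}\hat\nabla_{\mathbf{A}}l-\eta_A\mathbf{h}_{\mathbf{A},\tau}$ for step sizes $\eta_V,\eta_A>0$, where expectations are evaluated at $(\mathbf{V}_\tau,\mathbf{A}_\tau)$. Writing $\alpha_V,\alpha_A,\boldsymbol\Delta_V,\boldsymbol\Delta_A$ for the quantities at time $\tau$, $$\alpha_{V,\tau+1}=\alpha_{V,\tau}+\eta_VK_Q(1-\alpha_A\alpha_V)\alpha_A+\eta_V\frac{1-\alpha_V}{T}-\eta_V\alpha_V\|\boldsymbol\Delta_A\|_\mu^2-\frac{\eta_V}{K_P}\langle\mathbf{h}_{\mathbf{V},\tau},\mathbf{P}\rangle_\mu,$$ $$\alpha_{A,\tau+1}=\alpha_{A,\tau}+\eta_AK_P(1-\alpha_V\alpha_A)\alpha_V-\eta_A\alpha_A\|\boldsymbol\Delta_V\|_\mu^2-\frac{\eta_A}{K_Q}\langle\mathbf{h}_{\mathbf{A},\tau},\mathbf{Q}\rangle_\m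u.$$
   Context: $\boldsymbol\mu\in\mathbb{R}^N$ is a probability vector with positive entries; $\mathbf{P}\in\mathbb{R}^{N\times N}$ has nonnegative entries, columns summing to $1$, $\mathbf{P}\boldsymbol\mu=\boldsymbol\mu$; $\mathbf{Q}=(\mathbf{q}^{(1)},\dots,\mathbf{q}^{(N)})\in\mathbb{R}^{T\times N}$ has probability-vector columns. Data: $x_1,\dots,x_{T+1}$ i.i.d. with law $\boldsymbol\mu$, $x_o$ with $\Pr(x_o=n\mid x_{T+1}=k,x_1,\dots,x_T)=\sum_tq^{(k)}_tP_{n,x_t}$; $\mathbf{X}=(\mathbf{e}_{x_1},\dots,\mathbf{e}_{x_T})$; loss $l=\frac12\|\mathbf{e}_{x_o}-\mathbf{V}\mathbf{X}\mathbf{A}\mathbf{e}_{x_{T+1}}\|^2$. Preconditioned gradients: $\hat\nabla_{\mathbf{V}}l=(\mathbf{I}_N-\mathbf{1}\mathbf{1}^\top/N)(\nabla_{\mathbf{V}}l)\operatorname{diag}(1/\boldsymbol\mu)(\mathbf{I}_N-\boldsymbol\mu\boldsymbol\mu^\top/\|\boldsymbol\mu\|^2)$; $\hat\nabla_{\mathbf{A}}l$ has columns $\frac1{\mu_k}(\mathbf{I}_T-\mathbf{1}\mathbf{1}^\top/T)\nabla_{\mathbf{a}^{(k)}}l$. $\mathbf{h}_{\mathbf{V},\tau}=\hat\nabla^{(B)}_{\mathbf{V}}l-\mathbb{E}\hat\nabla_{\mathbf{V}}l$ and $\mathbf{h}_{\mathbf{A},\tau}=\hat\nabla^{(B)}_{\mathbf{A}}l-\mathbb{E}\hat\nabla_{\mathbf{A}}l$,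 where $\hat\nabla^{(B)}$ is the average of the preconditioned gradients over a mini-batch of $B$ fresh samples at step $\tau$. $\langle\mathbf{M},\mathbf{M}'\rangle_\mu=\operatorname{Tr}(\mathbf{M}\operatorname{diag}(\boldsymbol\mu)\mathbf{M}'^\top)$, $\|\mathbf{M}\|_\mu^2=\langle\mathbf{M},\mathbf{M}\rangle_\mu$. $K_P=\|\mathbf{P}\|_\mu^2-\|\boldsymbol\mu\|^2>0$, $K_Q=\|\mathbf{Q}\|_\mu^2-1/T>0$; for any iterate, $\alpha_V=(\langle\mathbf{V},\mathbf{P}\rangle_\mu-\|\boldsymbol\mu\|^2)/K_P$, $\alpha_A=(\langle\mathbf{A},\mathbf{Q}\rangle_\mu-1/T)/K_Q$, $\boldsymbol\Delta_V=\mathbf{V}-\alpha_V\mathbf{P}-(1-\alpha_V)\boldsymbol\mu\mathbf{1}^\top$, $\boldsymbol\Delta_A=\mathbf{A}-\alpha_A\mathbf{Q}-(1-\alpha_A)\mathbf{1}\mathbf{1}^\top/T$. *)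

(* Defs.v *)
From HB Require Import structures.
From mathcomp Require Import all_boot all_order all_algebra.
Set Implicit Arguments. Unset Strict Implicit. Unset Printing Implicit Defensive.
Import Order.TTheory GRing.Theory Num.Theory.
Local Open Scope ring_scope.

Section Defs.
Variables (R : realFieldType) (N T : nat).

(* A sample: (x_1..x_T, x_{T+1}, x_o). *)
Definition sample := ({ffun 'I_T -> 'I_N} * 'I_N * 'I_N)%type.

Definition evec (x : 'I_N) : 'cV[R]_N := \col_i (i == x)%:R.

Definition Xmat (xs : {ffun 'I_T -> 'I_N}) : 'M[R]_(N, T) :=
  \matrix_(i < N, t < T) (i == xs t)%:R.

Definition sqnorm (mu : 'cV[R]_N) : R := \sum_i mu i 0 ^+ 2.

Definition ipmu (m : nat) (mu : 'cV[R]_N) (M M' : 'M[R]_(m, N)) : R :=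
  \tr (M *m diag_mx mu^T *m M'^T).

Definition loss (V : 'M[R]_N) (A : 'M[R]_(T, N)) (s : sample) : R :=
  let: (xs, k, o) := s in
  let r := evec o - V *m Xmat xs *m A *m evec k in
  (\sum_i r i 0 ^+ 2) / 2.

Definition resid (V : 'M[R]_N) (A : 'M[R]_(T, N)) (s : sample) : 'cV[R]_N :=
  let: (xs, k, o) := s in evec o - V *m Xmat xs *m (A *m evec k).

Definition gradV (V : 'M[R]_N) (A : 'M[R]_(T, N)) (s : sample) : 'M[R]_N :=
  let: (xs, k, o) := s in
  - (resid V A s *m (Xmat xs *m (A *m evec k))^T).

Definition gradA (V : 'M[R]_N) (A : 'M[R]_(T, N)) (s : sample) : 'M[R]_(T, N) :=
  let: (xs, k, o) := s in
  - ((Xmat xs)^T *m V^T *m resid V A s *m (evec k)^T).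

Definition precV (mu : 'cV[R]_N) (G : 'M[R]_N) : 'M[R]_N :=
  (1%:M - const_mx (N%:R^-1)) *m G *m diag_mx (\row_j (mu j 0)^-1)
    *m (1%:M - (sqnorm mu)^-1 *: (mu *m mu^T)).

Definition precA (mu : 'cV[R]_N) (G : 'M[R]_(T, N)) : 'M[R]_(T, N) :=
  \matrix_(t < T, j < N) ((mu j 0)^-1 * ((1%:M - const_mx (T%:R^-1)) *m G) t j).

Definition sprob (mu : 'cV[R]_N) (P : 'M[R]_N) (Q : 'M[R]_(T, N))
  (s : sample) : R :=
  let: (xs, k, o) := s in
  (\prod_t mu (xs t) 0) * mu k 0 * (\sum_t Q t k * P o (xs t)).

Definition EgradV mu P Q V A : 'M[R]_N :=
  \sum_(s : sample) sprob mu P Q s *: precV mu (gradV V A s).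
Definition EgradA mu P Q V A : 'M[R]_(T, N) :=
  \sum_(s : sample) sprob mu P Q s *: precA mu (gradA V A s).

Definition hV mu P Q V A (B : nat) (bs : 'I_B -> sample) : 'M[R]_N :=
  B%:R^-1 *: (\sum_b precV mu (gradV V A (bs b))) - EgradV mu P Q V A.
Definition hA mu P Q V A (B : nat) (bs : 'I_B -> sample) : 'M[R]_(T, N) :=
  B%:R^-1 *: (\sum_b precA mu (gradA V A (bs b))) - EgradA mu P Q V A.

Definition KP (mu : 'cV[R]_N) (P : 'M[R]_N) : R := ipmu mu P P - sqnorm mu.
Definition KQ (mu : 'cV[R]_N) (Q : 'M[R]_(T, N)) : R := ipmu mu Q Q - T%:R^-1.

Definition alphaV mu P (V : 'M[R]_N) : R := (ipmu mu V P - sqnorm mu) / KP mu P.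
Definition alphaA mu (Q A : 'M[R]_(T, N)) : R := (ipmu mu A Q - T%:R^-1) / KQ mu Q.

Definition DeltaV mu P (V : 'M[R]_N) : 'M[R]_N :=
  V - alphaV mu P V *: P - (1 - alphaV mu P V) *: (mu *m const_mx 1).
Definition DeltaA mu (Q A : 'M[R]_(T, N)) : 'M[R]_(T, N) :=
  A - alphaA mu Q A *: Q - (1 - alphaA mu Q A) *: const_mx (T%:R^-1).

End Defs.

(* Main.v *)
Require Import Defs.
From HB Require Import structures.
From mathcomp Require Import all_boot all_order all_algebra.
From mathcomp Require Import ring lra.
Set Implicit Arguments. Unset Strict Implicit. Unset Printing Implicit Defensive.
Import Order.TTheory GRing.Theory Num.Theory.
Local Open Scope ring_scope.

Section Aux.
Variables (R : realFieldType) (N T : nat) (mu : 'cV[R]_N).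

Lemma ipmuE m (M M' : 'M[R]_(m,N)) :
  ipmu mu M M' = \sum_i \sum_j M i j * mu j 0 * M' i j.
Proof.
rewrite /ipmu /mxtrace; apply: eq_bigr => i _; rewrite !mxE.
by apply: eq_bigr => j _; rewrite mul_mx_diag !mxE.
Qed.

Lemma ipmuC m (M M' : 'M[R]_(m,N)) : ipmu mu M M' = ipmu mu M' M.
Proof.
rewrite !ipmuE; apply: eq_bigr => i _; apply: eq_bigr => j _.
by rewrite mulrC [M i j * _]mulrC mulrA.
Qed.

Lemma ipmuDl m (M1 M2 M' : 'M[R]_(m,N)) :
  ipmu mu (M1 + M2) M' = ipmu mu M1 M' + ipmu mu M2 M'.
Proof. by rewrite /ipmu !mulmxDl mxtraceD. Qed.

Lemma ipmuZl m a (M M' : 'M[R]_(m,N)) :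
  ipmu mu (a *: M) M' = a * ipmu mu M M'.
Proof. by rewrite /ipmu -!scalemxAl mxtraceZ. Qed.

Lemma ipmuNl m (M M' : 'M[R]_(m,N)) : ipmu mu (- M) M' = - ipmu mu M M'.
Proof. by rewrite -scaleN1r ipmuZl mulN1r. Qed.

Lemma ipmuBl m (M1 M2 M' : 'M[R]_(m,N)) :
  ipmu mu (M1 - M2) M' = ipmu mu M1 M' - ipmu mu M2 M'.
Proof. by rewrite ipmuDl ipmuNl. Qed.

Lemma ipmu_suml m (I : finType) (F : I -> 'M[R]_(m,N)) M' :
  ipmu mu (\sum_i F i) M' = \sum_i ipmu mu (F i) M'.
Proof.
elim/big_ind2: _ => //; last by move=> x y a b <- <-; rewrite ipmuDl.
by rewrite /ipmu !mul0mx mxtrace0.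
Qed.

Lemma ipmuDr m (M1 M2 M' : 'M[R]_(m,N)) :
  ipmu mu M' (M1 + M2) = ipmu mu M' M1 + ipmu mu M' M2.
Proof. by rewrite ipmuC ipmuDl !(ipmuC M'). Qed.
Lemma ipmuZr m a (M M' : 'M[R]_(m,N)) :
  ipmu mu M' (a *: M) = a * ipmu mu M' M.
Proof. by rewrite ipmuC ipmuZl ipmuC. Qed.
Lemma ipmuBr m (M1 M2 M' : 'M[R]_(m,N)) :
  ipmu mu M' (M1 - M2) = ipmu mu M' M1 - ipmu mu M' M2.
Proof. by rewrite ipmuC ipmuBl !(ipmuC M'). Qed.

Lemma W2 (mu1 : \sum_i mu i 0 = 1) (t t' : 'I_T) (e h : 'I_N -> R) :
 \sum_(xs : {ffun 'I_T -> 'I_N}) (\prod_s mu (xs s) 0) * (e (xs t) * h (xs t')) =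
 if t == t' then \sum_j mu j 0 * (e j * h j)
 else (\sum_j mu j 0 * e j) * (\sum_j mu j 0 * h j).
Proof.
pose F s j := mu j 0 * ((if s == t then e j else 1) * (if s == t' then h j else 1)).
have one s : s != t -> s != t' -> \sum_j F s j = 1.
  by rewrite /F => /negbTE-> /negbTE->; under eq_bigr do rewrite !mulr1; exact: mu1.
transitivity (\prod_s \sum_j F s j).
  rewrite bigA_distr_bigA /=; apply: eq_bigr => xs _.
  rewrite /F big_split /= big_split /=; congr (_ * (_ * _)).
    by rewrite -big_mkcond big_pred1_eq.
  by rewrite -big_mkcond big_pred1_eq.
rewrite (bigD1 t) //=; case: eqP => [ett'|/eqP ne]; first subst t'.
  rewrite [X in _ * X]big1 ?mulr1; last by move=> s st; exact: one.
  by apply: eq_bigr => j _; rewrite /F eqxx.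
rewrite [X in _ * X](bigD1 t') /=; last by rewrite eq_sym.
rewrite [X in _ * (_ * X)]big1 ?mulr1; last by move=> s /andP [st st']; exact: one.
congr (_ * _); apply: eq_bigr => j _; rewrite /F eqxx.
  by rewrite (negbTE ne) mulr1.
by rewrite eq_sym (negbTE ne) mul1r.
Qed.


Lemma sum_delta (a : 'I_N) (F : 'I_N -> R) : \sum_j (j == a)%:R * F j = F a.
Proof.
rewrite (bigD1 a) //= eqxx mul1r big1 ?addr0 // => j /negbTE->; by rewrite mul0r.
Qed.

Lemma W2g (mu1 : \sum_i mu i 0 = 1) (t t' : 'I_T) (g : 'I_N -> 'I_N -> R) :
 \sum_(xs : {ffun 'I_T -> 'I_N}) (\prod_s mu (xs s) 0) * g (xs t) (xs t') =
 if t == t' then \sum_j mu j 0 * g j j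
 else \sum_i \sum_j mu i 0 * mu j 0 * g i j.
Proof.
have gE i j : g i j = \sum_a (i == a)%:R * g a j.
  by rewrite (bigD1 i) //= eqxx mul1r big1 ?addr0 // => a; rewrite eq_sym => /negbTE->; rewrite mul0r.
under eq_bigr do rewrite gE mulr_sumr.
rewrite exchange_big /=.
under eq_bigr do rewrite (W2 mu1 t t' (fun i => (i == _)%:R) (g _)).
case: eqP => _.
  rewrite exchange_big /=; apply: eq_bigr => j _.
  rewrite -[RHS](sum_delta j (fun a => mu j 0 * g a j)).
  by apply: eq_bigr => a _; rewrite mulrCA eq_sym.
apply: eq_bigr => a _; under [RHS]eq_bigr do rewrite -mulrA; rewrite -mulr_sumr; congr (_ * _).
  by rewrite -[RHS](sum_delta a (fun j => mu j 0)); apply: eq_bigr => j _; rewrite mulrC.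
Qed.

Lemma Ebil (mu1 : \sum_i mu i 0 = 1) (c d : 'I_T -> R) (Z : 'M[R]_N) :
 \sum_(xs : {ffun 'I_T -> 'I_N}) (\prod_s mu (xs s) 0) *
    (\sum_t \sum_t' c t * d t' * Z (xs t) (xs t')) =
 (\sum_t c t) * (\sum_t d t) * (\sum_i \sum_j mu i 0 * mu j 0 * Z i j)
 + (\sum_t c t * d t) * (\sum_j mu j 0 * Z j j - \sum_i \sum_j mu i 0 * mu j 0 * Z i j).
Proof.
set S1 := (\sum_j mu j 0 * Z j j); set S2 := (\sum_i \sum_j mu i 0 * mu j 0 * Z i j).
transitivity (\sum_t \sum_t' c t * d t' * (S2 + (t == t')%:R * (S1 - S2))).
  under eq_bigr do rewrite mulr_sumr.
  rewrite exchange_big /=; apply: eq_bigr => t _.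
  under eq_bigr do rewrite mulr_sumr.
  rewrite exchange_big /=; apply: eq_bigr => t' _.
  under eq_bigr do rewrite mulrCA.
  rewrite -mulr_sumr W2g //; congr (_ * _).
  by case: eqP => _; rewrite /S1 /S2 ?mul1r ?mul0r ?addr0 // addrC subrK.
have -> : (\sum_t c t) * (\sum_t d t) * S2 + (\sum_t c t * d t) * (S1 - S2) =
   \sum_t (c t * (\sum_t' d t') * S2 + c t * d t * (S1 - S2)).
  by rewrite big_split /= -!mulr_suml.
apply: eq_bigr => t _.
under eq_bigr do rewrite mulrDr.
rewrite big_split /=; congr (_ + _).
  by rewrite -mulr_suml -mulr_sumr.
rewrite (bigD1 t) //= eqxx mul1r big1 ?addr0 //.
by move=> t' /negbTE; rewrite eq_sym => ->; rewrite mul0r mulr0.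
Qed.

Lemma XmatE (xs : {ffun 'I_T -> 'I_N}) (c : 'cV[R]_T) i :
  (Xmat R xs *m c) i 0 = \sum_t (i == xs t)%:R * c t 0.
Proof. by rewrite mxE; apply: eq_bigr => t _; rewrite mxE. Qed.

Lemma quadE (u v : 'cV[R]_N) (Z : 'M[R]_N) :
  (u^T *m Z *m v) 0 0 = \sum_i \sum_j u i 0 * Z i j * v j 0.
Proof.
rewrite mxE exchange_big /=; apply: eq_bigr => j _; rewrite mxE mulr_suml.
by apply: eq_bigr => i _; rewrite mxE.
Qed.

Lemma bilX (xs : {ffun 'I_T -> 'I_N}) (c d : 'cV[R]_T) (Z : 'M[R]_N) :
  ((Xmat R xs *m c)^T *m Z *m (Xmat R xs *m d)) 0 0 =
  \sum_t \sum_t' c t 0 * d t' 0 * Z (xs t) (xs t').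
Proof.
rewrite quadE.
transitivity (\sum_i \sum_j \sum_t \sum_t' (i == xs t)%:R * ((j == xs t')%:R *
                 (c t 0 * d t' 0 * Z i j))).
  apply: eq_bigr => i _; apply: eq_bigr => j _.
  rewrite !XmatE mulr_suml mulr_suml; apply: eq_bigr => t _.
  rewrite mulr_sumr; apply: eq_bigr => t' _.
  ring.
under eq_bigr do rewrite exchange_big /=.
rewrite exchange_big /=; apply: eq_bigr => t _.
under eq_bigr do rewrite exchange_big /=.
rewrite exchange_big /=; apply: eq_bigr => t' _.
under eq_bigr do rewrite -mulr_sumr.
rewrite (sum_delta (xs t) (fun i => \sum_j (j == xs t')%:R * (c t 0 * d t' 0 * Z i j))).
by rewrite (sum_delta (xs t') (fun j => (c t 0 * d t' 0 * Z (xs t) j))).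
Qed.

End Aux.

Section Gen.
Variable R : realFieldType.

Lemma sum_deltar n (a : 'I_n) (F : 'I_n -> R) : \sum_j F j * (j == a)%:R = F a.
Proof.
rewrite (bigD1 a) //= eqxx mulr1 big1 ?addr0 // => j /negbTE->; by rewrite mulr0.
Qed.

Lemma evecE n (k j : 'I_n) : (evec R k) j 0 = (j == k)%:R.
Proof. by rewrite mxE. Qed.

Lemma colEv m n (M : 'M[R]_(m,n)) k t : (M *m evec R k) t 0 = M t k.
Proof. by rewrite mxE; under eq_bigr do rewrite evecE; rewrite sum_deltar. Qed.

Lemma rowEv m n (y : 'M[R]_(m,n)) k t : (y *m evec R k) t 0 = y t k.
Proof. exact: colEv. Qed.

Lemma sumcol n (v : 'cV[R]_n) : \sum_j v j 0 = ((const_mx 1 : 'rV[R]_n) *m v) 0 0.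
Proof. by rewrite mxE; apply: eq_bigr => j _; rewrite mxE mul1r. Qed.

Lemma sum_evec n (k : 'I_n) : \sum_j (evec R k) j 0 = 1.
Proof. under eq_bigr do rewrite evecE -[(_ == _)%:R]mul1r; exact: (sum_deltar k (fun _ => 1)). Qed.

Lemma const1X N T (xs : {ffun 'I_T -> 'I_N}) :
  (const_mx 1 : 'rV[R]_N) *m Xmat R xs = const_mx 1.
Proof.
apply/matrixP => i t; rewrite !mxE.
under eq_bigr do rewrite !mxE mul1r -[(_ == _)%:R]mul1r.
exact: (sum_deltar (xs t) (fun _ => 1)).
Qed.

Lemma tr11 (M : 'M[R]_1) : \tr M = M 0 0.
Proof. exact: trace_mx11. Qed.

Lemma trmx11 (M : 'M[R]_1) : M^T 0 0 = M 0 0.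
Proof. by rewrite mxE. Qed.

Lemma mxBE m n (M1 M2 : 'M[R]_(m,n)) i j : (M1 - M2) i j = M1 i j - M2 i j.
Proof. by rewrite !mxE. Qed.
Lemma mxDE m n (M1 M2 : 'M[R]_(m,n)) i j : (M1 + M2) i j = M1 i j + M2 i j.
Proof. by rewrite !mxE. Qed.
Lemma mxNE m n (M1 : 'M[R]_(m,n)) i j : (- M1) i j = - M1 i j.
Proof. by rewrite !mxE. Qed.
Lemma mxZE m n a (M1 : 'M[R]_(m,n)) i j : (a *: M1) i j = a * M1 i j.
Proof. by rewrite !mxE. Qed.

End Gen.

Section Main.
Variables (R : realFieldType) (N T : nat) (mu : 'cV[R]_N) (P V : 'M[R]_N)
  (Q A : 'M[R]_(T,N)).
Hypotheses (mupos : forall i, 0 < mu i 0) (mu1 : \sum_i mu i 0 = 1)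
  (Pmu : P *m mu = mu) (Pcol : forall j, \sum_i P i j = 1)
  (Qcol : forall k, \sum_t Q t k = 1)
  (V1 : (const_mx 1 : 'rV[R]_N) *m V = const_mx 1)
  (A1 : (const_mx 1 : 'rV[R]_T) *m A = const_mx 1)
  (Vmu : V *m mu = mu).

Definition Dm : 'M[R]_N := diag_mx mu^T.
Definition Dinv : 'M[R]_N := diag_mx (\row_j (mu j 0)^-1).
Definition Pim : 'M[R]_N := 1%:M - (sqnorm mu)^-1 *: (mu *m mu^T).
Definition Zm : 'M[R]_N := Dinv *m Pim *m Dm *m P^T.

Definition uvec (xs : {ffun 'I_T -> 'I_N}) k : 'cV[R]_N := Xmat R xs *m (A *m evec R k).

Lemma sum_u xs k : \sum_j uvec xs k j 0 = 1.
Proof.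
by rewrite sumcol /uvec mulmxA const1X mulmxA A1 -sumcol sum_evec.
Qed.

Lemma sum_r xs k o : \sum_j (evec R o - V *m uvec xs k) j 0 = 0.
Proof.
have -> : \sum_j (evec R o - V *m uvec xs k) j 0 =
   \sum_j (evec R o) j 0 - \sum_j (V *m uvec xs k) j 0.
  by rewrite -sumrB; apply: eq_bigr => j _; rewrite mxBE.
by rewrite sum_evec sumcol mulmxA V1 -sumcol sum_u subrr.
Qed.

Lemma PV xs k o :
  ipmu mu (precV mu (gradV V A (xs,k,o))) P =
  - ((uvec xs k)^T *m Zm *m (evec R o - V *m uvec xs k)) 0 0.
Proof.
rewrite /precV /gradV /resid /ipmu -[V *m Xmat R xs *m _]mulmxA -/(uvec xs k).
set u := uvec xs k; set r := evec R o - V *m u.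
have Cr : (1%:M - const_mx N%:R^-1) *m r = r.
  rewrite mulmxBl mul1mx; suff -> : (const_mx N%:R^-1 : 'M[R]_N) *m r = 0 by rewrite subr0.
  apply/matrixP => i j; rewrite !mxE (ord1 j).
  under eq_bigr do rewrite mxE.
  by rewrite -mulr_sumr sum_r mulr0.
rewrite mulmxN !mulNmx mulmxA Cr raddfN /=; congr (- _).
by rewrite -[RHS]tr11 [RHS]mxtrace_mulC /Zm /Dm /Dinv /Pim !mulmxA.
Qed.


Definition wgt (xs : {ffun 'I_T -> 'I_N}) : R := \prod_t mu (xs t) 0.
Definition qvec k : 'cV[R]_T := Q *m evec R k.

Lemma pE (xs : {ffun 'I_T -> 'I_N}) k o : \sum_t Q t k * P o (xs t) = (P *m (Xmat R xs *m qvec k)) o 0.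
Proof.
rewrite mxE; under [RHS]eq_bigr do rewrite XmatE mulr_sumr.
rewrite [RHS]exchange_big /=; apply: eq_bigr => t _.
transitivity (\sum_i (P o i * Q t k) * (i == xs t)%:R).
  by rewrite (sum_deltar (xs t) (fun i => P o i * Q t k)) mulrC.
by apply: eq_bigr => i _; rewrite /qvec colEv; ring.
Qed.

Lemma const1P : (const_mx 1 : 'rV[R]_N) *m P = const_mx 1.
Proof.
apply/matrixP => i j; rewrite [RHS]mxE mxE; under eq_bigr do rewrite mxE mul1r; exact: Pcol.
Qed.

Lemma const1Q : (const_mx 1 : 'rV[R]_T) *m Q = const_mx 1.
Proof.
apply/matrixP => i j; rewrite [RHS]mxE mxE; under eq_bigr do rewrite mxE mul1r; exact: Qcol.
Qed.

Lemma sum_p xs k : \sum_o (P *m (Xmat R xs *m qvec k)) o 0 = 1.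
Proof.
by rewrite sumcol /qvec !mulmxA const1P const1X const1Q -sumcol sum_evec.
Qed.

Lemma innerO xs k (y : 'rV[R]_N) c :
  \sum_o sprob mu P Q (xs,k,o) * (- (y 0 o - c)) =
  - (wgt xs * mu k 0) * ((y *m (P *m (Xmat R xs *m qvec k))) 0 0 - c).
Proof.
rewrite /sprob -/(wgt xs); under eq_bigr do rewrite pE.
set p := fun o => (P *m (Xmat R xs *m qvec k)) o 0.
have -> : (y *m (P *m (Xmat R xs *m qvec k))) 0 0 = \sum_o y 0 o * p o.
  by rewrite mxE.
rewrite -[in RHS](mulr1 c) -[in RHS](sum_p xs k) -/p [in RHS]mulr_sumr -sumrB mulr_sumr.
by apply: eq_bigr => o _; rewrite /p; ring.
Qed.


Lemma innerV xs k :
  \sum_o sprob mu P Q (xs,k,o) * ipmu mu (precV mu (gradV V A (xs,k,o))) P =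
  - (wgt xs * mu k 0) *
   (\sum_t \sum_t' A t k * Q t' k * (Zm *m P) (xs t) (xs t')
    - \sum_t \sum_t' A t k * A t' k * (Zm *m V) (xs t) (xs t')).
Proof.
under eq_bigr do rewrite PV mulmxBr mxBE rowEv.
rewrite innerO; congr (_ * (_ - _)).
  rewrite mulmxA -[_ *m Zm *m P]mulmxA /uvec bilX.
  by apply: eq_bigr => t _; apply: eq_bigr => t' _; rewrite /qvec !colEv.
rewrite mulmxA -[_ *m Zm *m V]mulmxA /uvec bilX.
by apply: eq_bigr => t _; apply: eq_bigr => t' _; rewrite !colEv.
Qed.


Lemma mu_neq0 j : mu j 0 != 0.
Proof. by rewrite gt_eqF. Qed.

Lemma DDinv : Dm *m Dinv = 1%:M.
Proof.
rewrite /Dm /Dinv mulmx_diag -diag_const_mx; congr diag_mx.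
by apply/matrixP => i j; rewrite !mxE mulfV ?mu_neq0.
Qed.

Lemma muDinv : mu^T *m Dinv = const_mx 1.
Proof.
by apply/matrixP => i j; rewrite (ord1 i) /Dinv mul_mx_diag !mxE mulfV ?mu_neq0.
Qed.

Lemma c1D : (const_mx 1 : 'rV[R]_N) *m Dm = mu^T.
Proof. by apply/matrixP => i j; rewrite (ord1 i) /Dm mul_mx_diag !mxE mul1r. Qed.

Lemma c1mu : (const_mx 1 : 'rV[R]_N) *m mu = 1%:M.
Proof. by apply/matrixP => i j; rewrite (ord1 i) (ord1 j) -sumcol mu1 mxE. Qed.

Lemma muTmu : (mu^T *m mu) 0 0 = sqnorm mu.
Proof. by rewrite mxE /sqnorm; apply: eq_bigr => i _; rewrite mxE expr2. Qed.

Lemma S1E (Y : 'M[R]_N) : \sum_j mu j 0 * Y j j = \tr (Dm *m Y).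
Proof. by rewrite /mxtrace /Dm mul_diag_mx; apply: eq_bigr => j _; rewrite !mxE. Qed.

Lemma S2E (Y : 'M[R]_N) :
  \sum_i \sum_j mu i 0 * mu j 0 * Y i j = (mu^T *m Y *m mu) 0 0.
Proof.
rewrite -[mu^T]trmxK quadE; apply: eq_bigr => i _; apply: eq_bigr => j _.
by rewrite trmxK; ring.
Qed.

Definition cst : R := (mu^T *m Dm *m P^T *m mu) 0 0.

Lemma keyS1 (M : 'M[R]_N) : M *m mu = mu ->
  \tr (Dm *m (Zm *m M)) = ipmu mu M P - (sqnorm mu)^-1 * cst.
Proof.
move=> Mmu.
rewrite /Zm !mulmxA DDinv mul1mx -!mulmxA /Pim mulmxBl mul1mx raddfB /=.
rewrite -scalemxAl mxtraceZ; congr (_ - _ * _).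
  by rewrite mulmxA mxtrace_mulC /ipmu mulmxA.
rewrite -mulmxA mxtrace_mulC tr11 /cst -!mulmxA Mmu.
by rewrite !mulmxA.
Qed.

Lemma keyS2 : (mu^T *m Zm *m mu) 0 0 = sqnorm mu - (sqnorm mu)^-1 * cst.
Proof.
rewrite /Zm !mulmxA muDinv /Pim mulmxBr mulmx1 -scalemxAr mulmxA c1mu mul1mx.
rewrite !mulmxBl !mxBE -!scalemxAl mxZE c1D.
rewrite -/cst; congr (_ - _).
rewrite -trmx_mul Pmu; exact: muTmu.
Qed.

Lemma keyZ (M : 'M[R]_N) : M *m mu = mu ->
  \sum_j mu j 0 * (Zm *m M) j j - \sum_i \sum_j mu i 0 * mu j 0 * (Zm *m M) i j
  = ipmu mu M P - sqnorm mu.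
Proof.
move=> Mmu; rewrite S1E S2E keyS1 // mulmxA -mulmxA Mmu keyS2.
ring.
Qed.


Lemma sum_sample (F : sample N T -> R) :
  \sum_s F s = \sum_xs \sum_k \sum_o F (xs,k,o).
Proof.
transitivity (\sum_p \sum_o F (p, o)).
  by rewrite pair_bigA; apply: eq_bigr => -[p o].
by rewrite [RHS]pair_bigA; apply: eq_bigr => -[xs k].
Qed.

Lemma Acol k : \sum_t A t k = 1.
Proof.
have := congr1 (fun M : 'rV[R]_N => M 0 k) A1; rewrite /= !mxE => <-.
by apply: eq_bigr => t _; rewrite mxE mul1r.
Qed.

Lemma S2P : \sum_i \sum_j mu i 0 * mu j 0 * (Zm *m P) i j =
            \sum_i \sum_j mu i 0 * mu j 0 * (Zm *m V) i j.
Proof. by rewrite !S2E -!mulmxA Pmu Vmu. Qed.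

Lemma EVk k :
  \sum_xs - (wgt xs * mu k 0) *
   (\sum_t \sum_t' A t k * Q t' k * (Zm *m P) (xs t) (xs t')
    - \sum_t \sum_t' A t k * A t' k * (Zm *m V) (xs t) (xs t'))
  = - mu k 0 * ((\sum_t A t k * Q t k) * (ipmu mu P P - sqnorm mu)
               - (\sum_t A t k * A t k) * (ipmu mu V P - sqnorm mu)).
Proof.
transitivity (- mu k 0 * (\sum_xs wgt xs * (\sum_t \sum_t' A t k * Q t' k * (Zm *m P) (xs t) (xs t'))
   - \sum_xs wgt xs * (\sum_t \sum_t' A t k * A t' k * (Zm *m V) (xs t) (xs t')))).
  by rewrite -sumrB mulr_sumr; apply: eq_bigr => xs _; ring.
rewrite /wgt (Ebil mu1 (fun t => A t k) (fun t => Q t k)) (Ebil mu1 (fun t => A t k) (fun t => A t k)).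
rewrite Acol Qcol (keyZ (Pmu)) (keyZ Vmu) S2P.
ring.
Qed.

Lemma EVip : ipmu mu (EgradV mu P Q V A) P =
  - (ipmu mu A Q * (ipmu mu P P - sqnorm mu) - ipmu mu A A * (ipmu mu V P - sqnorm mu)).
Proof.
rewrite /EgradV ipmu_suml.
under eq_bigr do rewrite ipmuZl.
rewrite sum_sample.
under eq_bigr do (under eq_bigr do rewrite innerV).
rewrite exchange_big /=.
under eq_bigr do rewrite EVk.
have hip (M1 M2 : 'M[R]_(T,N)) : ipmu mu M1 M2 = \sum_k mu k 0 * \sum_t M1 t k * M2 t k.
  rewrite ipmuE exchange_big /=; apply: eq_bigr => k _; rewrite mulr_sumr.
  by apply: eq_bigr => t _; ring.
set c1 := ipmu mu P P - sqnorm mu; set c2 := ipmu mu V P - sqnorm mu.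
rewrite !hip !mulr_suml -sumrB -sumrN; apply: eq_bigr => k _; ring.
Qed.


Definition dv k : 'cV[R]_T := \col_t (Q t k - T%:R^-1).

Lemma PA xs k o :
  ipmu mu (precA mu (gradA V A (xs,k,o))) Q =
  - ((V *m (Xmat R xs *m dv k))^T 0 o
     - ((V *m uvec xs k)^T *m (V *m (Xmat R xs *m dv k))) 0 0).
Proof.
rewrite /gradA /resid -[V *m Xmat R xs *m _]mulmxA -/(uvec xs k).
set u := uvec xs k; set r := evec R o - V *m u.
set g := (Xmat R xs)^T *m V^T *m r.
have -> : (V *m (Xmat R xs *m dv k))^T 0 o
     - ((V *m u)^T *m (V *m (Xmat R xs *m dv k))) 0 0 = \sum_t g t 0 * dv k t 0.
  have -> : (V *m (Xmat R xs *m dv k))^T 0 o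
     - ((V *m u)^T *m (V *m (Xmat R xs *m dv k))) 0 0 =
     (r^T *m (V *m (Xmat R xs *m dv k))) 0 0.
    rewrite /r linearB /= mulmxBl mxBE; congr (_ - _).
    rewrite [LHS]mxE [RHS]mxE; under eq_bigr do rewrite [(evec R o)^T _ _]mxE evecE; by rewrite sum_delta.
  have -> : r^T *m (V *m (Xmat R xs *m dv k)) = g^T *m dv k.
    by rewrite /g !trmx_mul !trmxK !mulmxA.
  by rewrite mxE; apply: eq_bigr => t _; rewrite mxE.
rewrite ipmuE.
transitivity (\sum_t - (((1%:M - const_mx T%:R^-1) *m g) t 0 * Q t k)).
  apply: eq_bigr => t _.
  rewrite (bigD1 k) //= big1 ?addr0 => [|j /negbTE jk].
    rewrite /precA mxE.
    have -> : forall x y : R, (mu k 0)^-1 * x * mu k 0 * y = x * y.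
      by move=> x y; field; exact: mu_neq0.
    rewrite mulmxN mxNE mulmxA mulNr; congr (- (_ * _)).
    by rewrite mxE big_ord1 [(evec R k)^T _ _]mxE evecE eqxx mulr1.
  rewrite /precA mxE mulmxN mxNE mulmxA mxE big_ord1 [(evec R k)^T _ _]mxE evecE jk.
  by rewrite mulr0 oppr0 mulr0 !mul0r.
rewrite sumrN; congr (- _).
have Cg t : ((1%:M - const_mx T%:R^-1) *m g) t 0 = g t 0 - T%:R^-1 * \sum_l g l 0.
  rewrite mulmxBl mul1mx mxBE; congr (_ - _); rewrite mxE mulr_sumr.
  by apply: eq_bigr => l _; rewrite mxE.
under eq_bigr do rewrite Cg.
have dvE t : dv k t 0 = Q t k - T%:R^-1 by rewrite mxE.
under [RHS]eq_bigr do rewrite dvE.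
have -> : \sum_t g t 0 * (Q t k - T%:R^-1) = \sum_t g t 0 * Q t k - T%:R^-1 * \sum_t g t 0.
  by rewrite mulr_sumr -sumrB; apply: eq_bigr => t _; ring.
move: (\sum_l g l 0) => S.
under eq_bigr do rewrite mulrBl.
by rewrite sumrB -mulr_sumr Qcol mulr1.
Qed.


Lemma innerA xs k :
  \sum_o sprob mu P Q (xs,k,o) * ipmu mu (precA mu (gradA V A (xs,k,o))) Q =
  - (wgt xs * mu k 0) *
   (\sum_t \sum_t' Q t k * dv k t' 0 * (P^T *m V) (xs t) (xs t')
    - \sum_t \sum_t' A t k * dv k t' 0 * (V^T *m V) (xs t) (xs t')).
Proof.
under eq_bigr do rewrite PA.
rewrite innerO; congr (_ * (_ - _)).
  rewrite -trmx11 trmx_mul trmxK trmx_mul [_ *m (V *m _)]mulmxA -[_ *m P^T *m V]mulmxA bilX.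
  by apply: eq_bigr => t _; apply: eq_bigr => t' _; rewrite /qvec !colEv.
rewrite trmx_mul mulmxA -[_ *m V^T *m V]mulmxA /uvec bilX.
by apply: eq_bigr => t _; apply: eq_bigr => t' _; rewrite !colEv.
Qed.


Lemma Tneq0 (k : 'I_N) : (T%:R : R) != 0.
Proof.
have h0 : (T == 0)%N -> \sum_t Q t k = 0.
  move=> /eqP T0; apply: big1 => -[t ht] _; exfalso; by rewrite T0 in ht.
rewrite pnatr_eq0; apply/negP => /h0; rewrite Qcol => /eqP; by rewrite oner_eq0.
Qed.

Lemma sum_dv k : \sum_t dv k t 0 = 0.
Proof.
under eq_bigr do rewrite mxE.
by rewrite sumrB Qcol sumr_const card_ord -[_ *+ T]mulr_natr mulVf ?(Tneq0 k) ?subrr.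
Qed.

Lemma S1T (M1 M2 : 'M[R]_N) :
  \sum_j mu j 0 * (M1^T *m M2) j j = ipmu mu M2 M1.
Proof.
rewrite ipmuE exchange_big /=; apply: eq_bigr => j _; rewrite mxE mulr_sumr.
by apply: eq_bigr => i _; rewrite mxE; ring.
Qed.

Lemma S2T (M1 M2 : 'M[R]_N) : M1 *m mu = mu -> M2 *m mu = mu ->
  \sum_i \sum_j mu i 0 * mu j 0 * (M1^T *m M2) i j = sqnorm mu.
Proof.
move=> h1 h2; rewrite S2E mulmxA -trmx_mul -mulmxA h2 h1; exact: muTmu.
Qed.

Lemma EAk k :
  \sum_xs - (wgt xs * mu k 0) *
   (\sum_t \sum_t' Q t k * dv k t' 0 * (P^T *m V) (xs t) (xs t')
    - \sum_t \sum_t' A t k * dv k t' 0 * (V^T *m V) (xs t) (xs t'))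
  = - mu k 0 * ((\sum_t Q t k * dv k t 0) * (ipmu mu V P - sqnorm mu)
               - (\sum_t A t k * dv k t 0) * (ipmu mu V V - sqnorm mu)).
Proof.
transitivity (- mu k 0 * (\sum_xs wgt xs * (\sum_t \sum_t' Q t k * dv k t' 0 * (P^T *m V) (xs t) (xs t'))
   - \sum_xs wgt xs * (\sum_t \sum_t' A t k * dv k t' 0 * (V^T *m V) (xs t) (xs t')))).
  by rewrite -sumrB mulr_sumr; apply: eq_bigr => xs _; ring.
rewrite /wgt (Ebil mu1 (fun t => Q t k) (fun t => dv k t 0)) (Ebil mu1 (fun t => A t k) (fun t => dv k t 0)).
rewrite sum_dv !S1T (S2T Pmu Vmu) (S2T Vmu Vmu).
ring.
Qed.

Lemma EAip : ipmu mu (EgradA mu P Q V A) Q =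
  - ((ipmu mu Q Q - T%:R^-1) * (ipmu mu V P - sqnorm mu)
     - (ipmu mu A Q - T%:R^-1) * (ipmu mu V V - sqnorm mu)).
Proof.
rewrite /EgradA ipmu_suml.
under eq_bigr do rewrite ipmuZl.
rewrite sum_sample.
under eq_bigr do (under eq_bigr do rewrite innerA).
rewrite exchange_big /=.
under eq_bigr do rewrite EAk.
have hip (M1 : 'M[R]_(T,N)) : (forall k, \sum_t M1 t k = 1) ->
    ipmu mu M1 Q - T%:R^-1 = \sum_k mu k 0 * \sum_t M1 t k * dv k t 0.
  move=> hc.
  transitivity (\sum_k mu k 0 * (\sum_t M1 t k * Q t k) - T%:R^-1 * \sum_k mu k 0).
    rewrite mu1 mulr1; congr (_ - _); rewrite ipmuE exchange_big /=.
    apply: eq_bigr => k _; rewrite mulr_sumr; apply: eq_bigr => t _; ring.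
  rewrite mulr_sumr -sumrB; apply: eq_bigr => k _.
  have -> : \sum_t M1 t k * dv k t 0 = \sum_t M1 t k * Q t k - T%:R^-1.
    under eq_bigr do rewrite mxE mulrBr.
    by rewrite sumrB -mulr_suml hc mul1r.
  ring.
set c1 := ipmu mu V P - sqnorm mu; set c2 := ipmu mu V V - sqnorm mu.
rewrite !hip //; last exact: Acol.
rewrite !mulr_suml -sumrB -sumrN; apply: eq_bigr => k _; ring.
Qed.


Lemma ipmuJ (M : 'M[R]_(T,N)) : (forall k, \sum_t M t k = 1) ->
  ipmu mu M (const_mx T%:R^-1) = T%:R^-1.
Proof.
move=> hc; rewrite ipmuE exchange_big /=.
transitivity (\sum_j T%:R^-1 * (mu j 0 * \sum_t M t j)).
  apply: eq_bigr => j _; rewrite !mulr_sumr; apply: eq_bigr => t _; rewrite mxE; ring.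
under eq_bigr do rewrite hc mulr1.
by rewrite -mulr_sumr mu1 mulr1.
Qed.

Lemma Jcol (k : 'I_N) : \sum_t (const_mx T%:R^-1 : 'M[R]_(T,N)) t k = 1.
Proof.
under eq_bigr do rewrite mxE.
by rewrite sumr_const card_ord -[_ *+ T]mulr_natr mulVf ?(Tneq0 k).
Qed.

Lemma PythA (hKQ : KQ mu Q != 0) : ipmu mu (DeltaA mu Q A) (DeltaA mu Q A) =
  ipmu mu A A - (alphaA mu Q A)^+2 * KQ mu Q - T%:R^-1.
Proof.
rewrite /DeltaA; set x := alphaA mu Q A; set J := const_mx T%:R^-1.
have hJ (M : 'M[R]_(T,N)) : (forall k, \sum_t M t k = 1) -> ipmu mu J M = T%:R^-1.
  by move=> hc; rewrite ipmuC ipmuJ.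
have hx : ipmu mu A Q = x * KQ mu Q + T%:R^-1.
  by rewrite /x /alphaA divfK // subrK.
rewrite !ipmuBl !ipmuBr !ipmuZl !ipmuZr (ipmuJ Acol) (ipmuJ Qcol) (hJ _ Acol) (hJ _ Qcol) (hJ _ Jcol).
rewrite (ipmuC mu Q A) hx /KQ; ring.
Qed.


Lemma ipmuM0 (M : 'M[R]_N) : M *m mu = mu ->
  ipmu mu M (mu *m const_mx 1) = sqnorm mu.
Proof.
move=> hM; have -> : sqnorm mu = (mu^T *m M *m mu) 0 0 by rewrite -mulmxA hM muTmu.
rewrite -S2E ipmuE.
apply: eq_bigr => i _; apply: eq_bigr => j _.
rewrite mxE big_ord1 mxE mulr1; ring.
Qed.

Lemma M0mu : (mu *m const_mx 1) *m mu = mu.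
Proof. by rewrite -mulmxA c1mu mulmx1. Qed.

Lemma PythV (hKP : KP mu P != 0) : ipmu mu (DeltaV mu P V) (DeltaV mu P V) =
  ipmu mu V V - sqnorm mu - (alphaV mu P V)^+2 * KP mu P.
Proof.
rewrite /DeltaV; set x := alphaV mu P V; set M0 := mu *m const_mx 1.
have hJ (M : 'M[R]_N) : M *m mu = mu -> ipmu mu M0 M = sqnorm mu.
  by move=> hc; rewrite ipmuC ipmuM0.
have hx : ipmu mu V P = x * KP mu P + sqnorm mu.
  by rewrite /x /alphaV divfK // subrK.
rewrite !ipmuBl !ipmuBr !ipmuZl !ipmuZr (ipmuM0 Vmu) (ipmuM0 Pmu) (hJ _ Vmu) (hJ _ Pmu) (hJ _ M0mu).
rewrite (ipmuC mu P V) hx /KP; ring.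
Qed.

End Main.

Theorem lemmaC5 (R : realFieldType) (N T : nat)
  (mu : 'cV[R]_N) (P : 'M[R]_N) (Q : 'M[R]_(T, N))
  (Vt : 'M[R]_N) (At : 'M[R]_(T, N)) (etaV etaA : R)
  (B : nat) (bs : 'I_B -> sample N T) :
  (* mu : probability vector with positive entries *)
  (forall i, 0 < mu i 0) -> \sum_i mu i 0 = 1 ->
  (* P : nonnegative, column-stochastic, P mu = mu *)
  (forall i j, 0 <= P i j) -> (forall j, \sum_i P i j = 1) -> P *m mu = mu ->
  (* Q : columns are probability vectors *)
  (forall t k, 0 <= Q t k) -> (forall k, \sum_t Q t k = 1) ->
  0 < KP mu P -> 0 < KQ mu Q ->
  (* mini-batch of B >= 1 samples *)
  (0 < B)%N ->
  (* constraints on the current iterate *)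
  (const_mx 1 : 'rV[R]_N) *m Vt = const_mx 1 ->
  (const_mx 1 : 'rV[R]_T) *m At = const_mx 1 ->
  Vt *m mu = mu ->
  0 < etaV -> 0 < etaA ->
  let EV := EgradV mu P Q Vt At in
  let EA := EgradA mu P Q Vt At in
  let hVt := hV mu P Q Vt At bs in
  let hAt := hA mu P Q Vt At bs in
  let V1 := Vt - etaV *: EV - etaV *: hVt in
  let A1 := At - etaA *: EA - etaA *: hAt in
  let aV := alphaV mu P Vt in
  let aA := alphaA mu Q At in
  alphaV mu P V1 =
    aV + etaV * KQ mu Q * (1 - aA * aV) * aA + etaV * ((1 - aV) / T%:R)
    - etaV * aV * ipmu mu (DeltaA mu Q At) (DeltaA mu Q At)
    - etaV / KP mu P * ipmu mu hVt P
  /\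
  alphaA mu Q A1 =
    aA + etaA * KP mu P * (1 - aV * aA) * aV
    - etaA * aA * ipmu mu (DeltaV mu P Vt) (DeltaV mu P Vt)
    - etaA / KQ mu Q * ipmu mu hAt Q.
Proof.
move=> mupos mu1 Pnn Pcol Pmu Qnn Qcol KPpos KQpos Bpos V1h A1h Vmu etaVpos etaApos.
move=> EV EA hVt hAt V1 A1' aV aA.
clearbody hVt hAt.
have hKP : KP mu P != 0 by rewrite gt_eqF.
have hKQ : KQ mu Q != 0 by rewrite gt_eqF.
have hT : (T%:R : R) != 0.
  have N0 : (0 < N)%N.
    case: (posnP N) => // N0; move: mu1; rewrite big1 => [/eqP|[i hi] _]; first by rewrite eq_sym oner_eq0.
    by exfalso; rewrite N0 in hi.
  exact: (Tneq0 Qcol (Ordinal N0)).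
split.
  rewrite PythA // /V1 /alphaV !ipmuBl !ipmuZl /EV EVip // /aV /aA /alphaV /alphaA.
  move: hKP hKQ; rewrite /KP /KQ => hKP hKQ.
  move: hT hKQ; move: (T%:R : R) => t ht hKQ.
have h2 : ipmu mu Q Q * t - 1 != 0 by move: (mulf_neq0 hKQ ht); rewrite mulrBl mulVf.
  field.
  by repeat (apply/andP; split).
rewrite PythV // /A1' /alphaA !ipmuBl !ipmuZl /EA EAip // /aV /aA /alphaV /alphaA.
move: hKP hKQ; rewrite /KP /KQ => hKP hKQ.
move: hT hKQ; move: (T%:R : R) => t ht hKQ.
have h2 : ipmu mu Q Q * t - 1 != 0 by move: (mulf_neq0 hKQ ht); rewrite mulrBl mulVf.
field.
by repeat (apply/andP; split).
Qed.
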